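(* Let $\Omega\subset\mathbb{R}^d$ be a bounded domain with a mesh $\mathcal{M}$ as described in the context, let $0=t_0<t_1<\dots<t_N=T$ be a uniform time grid with step $\delta t$, and let $\gamma>1$. Let $(\rho_K^n,e_K^n,p_K^n)_{K\in\mathcal{M},0\le n\le N}$ be positive real numbers and $(u_{K,\sigma}^n)$ normal face velocities as in the context, satisfying, for every $K\in\mathcal{M}$ and $0\le n\le N-1$, the implicit scheme \[ \frac{|K|}{\delta t}(\rho_K^{n+1}-\rho_K^n)+\sum_{\sigma\in\mathcal{E}(K)}F_{K,\sigma}^{n+1}=0, \] \[ \frac{|K|}{\delta t}(\rho_K^{n+1}e_K^{n+1}-\rho_K^ne_K^n)+\sum_{\sigma\in\mathcal{E}(K)}F_{K,\sigma}^{n+1}e_\sigma^{n+1}+p_K^{n+1}\sum_{\sigma\in\mathcal{E}(K)}|\sigma|\,u_{K,\sigma}^{n+1}\ge 0, \qquad p_K^{n+1}=(\gamma-1)\rho_K^{n+1}e_K^{n+1}, \] where $F_{K,\sigma}^{n+1}=|\sigma|\,\rho_\sigma^{n+1}u_{K,\sigma}^{n+1}$, and where the face values are upwind: for $\sigma=K|L\in\mathcal{E}_{\rm int}$, $\rho_\sigma^{n+1}=\rho_K^{n+1}$ and $e_\sigma^{n+1}=e_K^{n+1}$ if $u_{K,\sigma}^{n+1}\ge0$, and $\rho_\sigma^{n+1}=\rho_L^{n+1}$, $e_\sigma^{n+1}=e_L^{n+1}$ otherwise. Then for every $K\in\mathcal{M}$ and $0\le n\le N-1$, \[ \frac{|K|}{\delta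 t}(\eta_K^{n+1}-\eta_K^n)+\sum_{\sigma\in\mathcal{E}(K)}|\sigma|\,\eta_\sigma^{n+1}u_{K,\sigma}^{n+1}\le 0, \] where $\eta_K^m=\varphi_\rho(\rho_K^m)+\rho_K^m\varphi_e(e_K^m)$ for $m=n,n+1$, and $\eta_\sigma^{n+1}=\varphi_\rho(\rho_\sigma^{n+1})+\rho_\sigma^{n+1}\varphi_e(e_\sigma^{n+1})$, with $\varphi_\rho(z)=z\log z$ and $\varphi_e(z)=-\frac{1}{\gamma-1}\log z$ for $z>0$.
   Context: Mesh: $\mathcal{M}$ is a finite decomposition of $\Omega$ into polytopal cells $K$, regular in the finite element sense; $\mathcal{E}$ is the set of $(d-1)$-faces, $\mathcal{E}(K)$ the faces of $K$ (bounded in number), $\mathcal{E}_{\rm int}$ the faces interior to $\Omega$, $\mathcal{E}_{\rm ext}$ those on $\partial\Omega$; an interior face separating cells $K$ and $L$ is written $\sigma=K|L$. $|K|$ is the $d$-measure of $K$ and $|\sigma|$ the $(d-1)$-measure of $\sigma$. For each $K$, $\sigma\in\mathcal{E}(K)$ and $n$, $u_{K,\sigma}^n\in\mathbb{R}$ approximates the outward normal velocity on $\sigma$; $u_{K,\sigma}^n=0$ for $\sigma\in\mathcal{E}_{\rm ext}$ (so all face terms on external faces vanish) and $u_{L,\sigma}^n=-u_{K,\sigma}^n$ for $\sigma=K|L$. Face values $\rho_\sigma^n,e_\sigma^n$ depend only on the face $\sigma$ and are positive; all $\rho_K^n,e_K^n$ are positive. *)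

(* Defs.v *)
From HB Require Import structures.
From mathcomp Require Import all_boot all_order all_algebra.
From mathcomp Require Import all_classical all_reals all_analysis.
Set Implicit Arguments. Unset Strict Implicit. Unset Printing Implicit Defensive.
Import Order.TTheory GRing.Theory Num.Theory.
Local Open Scope ring_scope.

Definition phi_rho (R : realType) (z : R) : R := z * ln z.
Definition phi_e (R : realType) (gamma z : R) : R := - ((gamma - 1)^-1 * ln z).
Definition eta_ent (R : realType) (gamma rho e : R) : R :=
  phi_rho rho + rho * phi_e gamma e.

(* Main.v *)
Require Import Defs.
From HB Require Import structures.
From mathcomp Require Import all_boot all_order all_algebra.
From mathcomp Require Import all_classical all_reals all_analysis.
From mathcomp Require Import ring lra.
Import Order.TTheory GRing.Theory Num.Theory.
Local Open Scope ring_scope.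

Lemma ln_sub_le (R : realType) (x y : R) : 0 < x -> 0 < y -> ln x - ln y <= x / y - 1.
Proof.
move=> x0 y0.
have xy0 : 0 < x / y by rewrite divr_gt0.
rewrite -ln_div ?posrE //.
have := expR_ge1Dx (ln (x / y)); rewrite lnK ?posrE //; lra.
Qed.

Arguments ln_sub_le {R x y}.

Lemma key_ineq (R : realType) (gamma r s e f : R) : 1 < gamma ->
  0 < r -> 0 < s -> 0 < e -> 0 < f ->
  0 <= eta_ent gamma s f - eta_ent gamma r e
       - (ln r + 1 - (gamma - 1)^-1 * ln e + (gamma - 1)^-1) * (s - r)
       + ((gamma - 1)^-1 / e) * (s * f - r * e).
Proof.
move=> g1 r0 s0 e0 f0.
have g0 : 0 < (gamma - 1)^-1 by rewrite invr_gt0 subr_gt0.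
have h1 := ln_sub_le r0 s0.
have h2 := ln_sub_le f0 e0.
have h1' : s * (ln r - ln s) <= r - s.
  have := ler_wpM2l (ltW s0) h1.
  have -> : s * (r / s - 1) = r - s by field; rewrite gt_eqF.
  done.
have h2' : 0 <= s * (gamma - 1)^-1 * (f / e - 1 - (ln f - ln e)).
  by apply: mulr_ge0; [apply: mulr_ge0; apply: ltW|lra].
have E : eta_ent gamma s f - eta_ent gamma r e
       - (ln r + 1 - (gamma - 1)^-1 * ln e + (gamma - 1)^-1) * (s - r)
       + ((gamma - 1)^-1 / e) * (s * f - r * e)
   = (s * (ln s - ln r) - s + r) + s * (gamma - 1)^-1 * (f / e - 1 - (ln f - ln e)).
  rewrite /eta_ent /phi_rho /phi_e; field.
  by rewrite !gt_eqF // subr_gt0.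
rewrite E; lra.
Qed.

Arguments key_ineq {R gamma r s e f}.

Theorem theorem2p3 (R : realType) (cell face : finType)
  (EK : cell -> {set face}) (ext : {set face})
  (measK : cell -> R) (measF : face -> R)
  (N : nat) (dt gamma : R)
  (rho e p : nat -> cell -> R) (u : nat -> cell -> face -> R)
  (rhoF eF : nat -> face -> R) :
  (* mesh: positive measures *)
  (forall K, 0 < measK K) -> (forall s, 0 < measF s) ->
  (* an interior face separates exactly two distinct cells *)
  (forall s, s \notin ext -> exists K L, [/\ K != L, s \in EK K, s \in EK L &
       forall M, s \in EK M -> M = K \/ M = L]) ->
  (* an external face belongs to exactly one cell *)
  (forall s, s \in ext -> exists K, s \in EK K /\
       forall M, s \in EK M -> M = K) ->
  (* time step, adiabatic exponent *)
  0 < dt -> 1 < gamma ->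
  (* positivity *)
  (forall n K, (n <= N)%N -> [/\ 0 < rho n K, 0 < e n K & 0 < p n K]) ->
  (forall n s, (n <= N)%N -> 0 < rhoF n s /\ 0 < eF n s) ->
  (* normal velocities: zero on external faces, antisymmetric on interior faces *)
  (forall n K s, s \in EK K -> s \in ext -> u n K s = 0) ->
  (forall n K L s, s \notin ext -> K != L -> s \in EK K -> s \in EK L ->
       u n L s = - u n K s) ->
  (* upwind face values *)
  (forall n K s, (n < N)%N -> s \in EK K -> s \notin ext -> 0 < u n.+1 K s ->
       rhoF n.+1 s = rho n.+1 K /\ eF n.+1 s = e n.+1 K) ->
  (* mass balance *)
  (forall n K, (n < N)%N ->
     measK K / dt * (rho n.+1 K - rho n K)
     + \sum_(s in EK K) measF s * rhoF n.+1 s * u n.+1 K s = 0) ->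
  (* internal energy balance (inequality) *)
  (forall n K, (n < N)%N ->
     0 <= measK K / dt * (rho n.+1 K * e n.+1 K - rho n K * e n K)
     + \sum_(s in EK K) measF s * rhoF n.+1 s * u n.+1 K s * eF n.+1 s
     + p n.+1 K * \sum_(s in EK K) measF s * u n.+1 K s) ->
  (* equation of state *)
  (forall n K, (n < N)%N -> p n.+1 K = (gamma - 1) * rho n.+1 K * e n.+1 K) ->
  (* conclusion: discrete entropy inequality *)
  forall n K, (n < N)%N ->
     measK K / dt * (eta_ent gamma (rho n.+1 K) (e n.+1 K) - eta_ent gamma (rho n K) (e n K))
     + \sum_(s in EK K) measF s * eta_ent gamma (rhoF n.+1 s) (eF n.+1 s) * u n.+1 K s
     <= 0.
Proof.
move=> HK HF _ _ Hdt Hg Hpos HposF Hext Hanti Hup Hmass Hen Hp n K ltnN.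
have [r1 e1 _] := Hpos n.+1 K ltnN.
have [r0 e0 _] := Hpos n K (ltnW ltnN).
have c0 : 0 < measK K / dt by rewrite divr_gt0.
set c := measK K / dt in c0 *.
have gi0 : 0 < (gamma - 1)^-1 by rewrite invr_gt0 subr_gt0.
set g := (gamma - 1)^-1 in gi0 *.
set A := ln (rho n.+1 K) + 1 - g * ln (e n.+1 K) + g.
set B := g / e n.+1 K.
have B0 : 0 <= B by rewrite /B ltW // divr_gt0.
pose br s := eta_ent gamma (rhoF n.+1 s) (eF n.+1 s) - A * rhoF n.+1 s
   + B * (rhoF n.+1 s * eF n.+1 s) + rho n.+1 K.
have hT : \sum_(s in EK K) measF s * u n.+1 K s * br s <= 0.
  apply: sumr_le0 => s sK.
  have [rs es] := HposF n.+1 s ltnN.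
  have kb := key_ineq Hg r1 rs e1 es.
  have Ebr : br s = eta_ent gamma (rhoF n.+1 s) (eF n.+1 s) - eta_ent gamma (rho n.+1 K) (e n.+1 K)
       - (ln (rho n.+1 K) + 1 - (gamma - 1)^-1 * ln (e n.+1 K) + (gamma - 1)^-1) * (rhoF n.+1 s - rho n.+1 K)
       + ((gamma - 1)^-1 / e n.+1 K) * (rhoF n.+1 s * eF n.+1 s - rho n.+1 K * e n.+1 K).
    rewrite /br /A /B /g /eta_ent /phi_rho /phi_e; field.
    by rewrite !gt_eqF // subr_gt0.
  case: (boolP (s \in ext)) => sext.
    by rewrite (Hext _ _ _ sK sext) mulr0 mul0r.
  have [upos|uneg] := ltP 0 (u n.+1 K s).
    have [h1 h2] := Hup n K s ltnN sK sext upos.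
    have -> : br s = 0.
      rewrite /br h1 h2 /A /B /g /eta_ent /phi_rho /phi_e; field.
      by rewrite !gt_eqF // subr_gt0.
    by rewrite mulr0.
  rewrite Ebr; apply: mulr_le0_ge0 => //.
  by apply: mulr_ge0_le0 => //; apply: ltW.
have hsum : \sum_(s in EK K) measF s * u n.+1 K s * br s =
   \sum_(s in EK K) measF s * eta_ent gamma (rhoF n.+1 s) (eF n.+1 s) * u n.+1 K s
   + (- A) * \sum_(s in EK K) measF s * rhoF n.+1 s * u n.+1 K s
   + B * \sum_(s in EK K) measF s * rhoF n.+1 s * u n.+1 K s * eF n.+1 s
   + rho n.+1 K * \sum_(s in EK K) measF s * u n.+1 K s.
  rewrite !mulr_sumr -!big_split /=; apply: eq_bigr => s _; rewrite /br; ring.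
have kt := key_ineq Hg r1 r0 e1 e0.
have hc : 0 <= c * (eta_ent gamma (rho n K) (e n K) - eta_ent gamma (rho n.+1 K) (e n.+1 K) -
       A * (rho n K - rho n.+1 K) + B * (rho n K * e n K - rho n.+1 K * e n.+1 K)).
  by apply: mulr_ge0; [apply: ltW|].
have hm := Hmass n K ltnN.
have hm' : A * (c * (rho n.+1 K - rho n K)) +
   A * \sum_(s in EK K) measF s * rhoF n.+1 s * u n.+1 K s = 0.
  by rewrite -mulrDr hm mulr0.
have hpB : B * p n.+1 K = rho n.+1 K.
  rewrite Hp // /B /g; field; by rewrite !gt_eqF // subr_gt0.
have hE : 0 <= B * (c * (rho n.+1 K * e n.+1 K - rho n K * e n K))
   + B * \sum_(s in EK K) measF s * rhoF n.+1 s * u n.+1 K s * eF n.+1 s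
   + rho n.+1 K * \sum_(s in EK K) measF s * u n.+1 K s.
  have := mulr_ge0 B0 (Hen n K ltnN).
  rewrite !mulrDr (mulrA B (p n.+1 K)) hpB; done.
move: hT; rewrite hsum => hT.
move: hT hc hm' hE.
generalize (\sum_(s in EK K) measF s * eta_ent gamma (rhoF n.+1 s) (eF n.+1 s) * u n.+1 K s).
generalize (\sum_(s in EK K) measF s * rhoF n.+1 s * u n.+1 K s).
generalize (\sum_(s in EK K) measF s * rhoF n.+1 s * u n.+1 K s * eF n.+1 s).
generalize (\sum_(s in EK K) measF s * u n.+1 K s).
move=> S3 S2 S1 S0 hT hc hm' hE.
lra.
Qed.
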